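(* Let $\sigma$ be an involutive non-degenerate quiver-theoretic Yang--Baxter map on a nonempty quiver $\mathscr{A}$ over $\Lambda$, and let $E$ be the closure of (the image of) $\mathscr{A}$ under right-lcms in the structure category $\mathscr{C}(\sigma)$. Suppose there is a finite $n$ with $|\mathscr{A}(\lambda,\Lambda)|\le n$ for all $\lambda\in\Lambda$. Then every element of $E$ has length at most $n$. In particular $E\subsetneq\mathscr{C}(\sigma)$.
   Context: Write $\sigma(x,y)=(x\rightharpoonup y,x\leftharpoonup y)$. A quiver-theoretic Yang--Baxter map is a source/target-preserving map $\sigma$ on composable pairs satisfying the braid relation; involutive: $\sigma^2=\mathrm{id}$; non-degenerate: all $x\rightharpoonup\cdot\colon\mathscr{A}(\mathfrak{t}(x),\Lambda)\to\mathscr{A}(\mathfrak{s}(x),\Lambda)$ and $\cdot\leftharpoonup y\colon\mathscr{A}(\Lambda,\mathfrak{s}(y))\to\mathscr{A}(\Lambda,\mathfrak{t}(y))$ bijective. $\mathscr{A}(\lambda,\Lambda)$ is the set of arrows with source $\lambda$. $\mathscr{C}(\sigma)$ is the category presented by generators $\mathscr{A}$ and the length-preserving relations $x|y\sim(x\rightharpoonup y)|(x\leftharpoonup y)$, so the length of an element (length of any representing path) is well defined. *)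

(* Defs.v *)
From mathcomp Require Import ssreflect ssrfun ssrbool eqtype ssrnat seq.
Set Implicit Arguments. Unset Strict Implicit. Unset Printing Implicit Defensive.

(* A path (= morphism representative of the structure category C(sigma)) is a
   pair (lambda, [x1; ...; xk]) read left to right: x1 | x2 | ... | xk, starting
   at vertex lambda (the empty list is the identity at lambda).
   sigma(x,y) = (lact x y, ract x y) = (x -> y, x <- y); only its values on
   composable pairs (tgt x = src y) matter. *)

Section Quiver.
Variables (Lam A : Type) (src tgt : A -> Lam) (lact ract : A -> A -> A).

Definition composable (x y : A) : Prop := tgt x = src y.

Definition qYB_preserving : Prop :=
  forall x y, composable x y ->
    [/\ src (lact x y) = src x, tgt (lact x y) = src (ract x y)
      & tgt (ract x y) = tgt y].

Definition sig12 (w : A * A * A) : A * A * A :=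
  let: (x, y, z) := w in (lact x y, ract x y, z).
Definition sig23 (w : A * A * A) : A * A * A :=
  let: (x, y, z) := w in (x, lact y z, ract y z).

Definition braid : Prop :=
  forall x y z, composable x y -> composable y z ->
    sig12 (sig23 (sig12 (x, y, z))) = sig23 (sig12 (sig23 (x, y, z))).

Definition qYB_map : Prop := qYB_preserving /\ braid.

Definition involutive_qYB : Prop :=
  forall x y, composable x y ->
    lact (lact x y) (ract x y) = x /\ ract (lact x y) (ract x y) = y.

(* x -> . : A(t(x), Lam) -> A(s(x), Lam) and . <- y : A(Lam, s(y)) -> A(Lam, t(y))
   are bijections *)
Definition nondegenerate : Prop :=
  (forall x,
     (forall y1 y2, src y1 = tgt x -> src y2 = tgt x ->
        lact x y1 = lact x y2 -> y1 = y2) /\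
     (forall z, src z = src x -> exists2 y, src y = tgt x & lact x y = z)) /\
  (forall y,
     (forall x1 x2, tgt x1 = src y -> tgt x2 = src y ->
        ract x1 y = ract x2 y -> x1 = x2) /\
     (forall z, tgt z = tgt y -> exists2 x, tgt x = src y & ract x y = z)).

Definition path := (Lam * seq A)%type.

Fixpoint valid_from (l : Lam) (p : seq A) : Prop :=
  match p with
  | [::] => True
  | x :: q => src x = l /\ valid_from (tgt x) q
  end.

Fixpoint tgt_from (l : Lam) (p : seq A) : Lam :=
  match p with
  | [::] => l
  | x :: q => tgt_from (tgt x) q
  end.

Definition valid (f : path) : Prop := valid_from f.1 f.2.
Definition ptgt (f : path) : Lam := tgt_from f.1 f.2.
Definition plength (f : path) : nat := size f.2.

Inductive step : path -> path -> Prop :=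
| step_intro l u x y v : composable x y ->
    step (l, u ++ x :: y :: v) (l, u ++ lact x y :: ract x y :: v).

(* equality of morphisms in C(sigma): the congruence generated by the relations *)
Inductive pequiv : path -> path -> Prop :=
| pequiv_refl f : pequiv f f
| pequiv_step f g : step f g -> pequiv f g
| pequiv_sym f g : pequiv f g -> pequiv g f
| pequiv_trans f g h : pequiv f g -> pequiv g h -> pequiv f h.

Definition rmult (f h : path) : Prop :=
  exists2 r : seq A, valid_from (ptgt f) r & pequiv (f.1, f.2 ++ r) h.

Definition is_rlcm (f g h : path) : Prop :=
  [/\ valid h, rmult f h, rmult g h &
      forall h', valid h' -> rmult f h' -> rmult g h' -> rmult h h'].

Inductive lcm_closure : path -> Prop :=
| lcl_gen (x : A) (f : path) : pequiv f (src x, [:: x]) -> lcm_closure f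
| lcl_lcm (f g h : path) : lcm_closure f -> lcm_closure g -> is_rlcm f g h -> lcm_closure h.

End Quiver.

(* Main.v *)
Require Import Defs.
From mathcomp Require Import ssreflect ssrfun ssrbool eqtype ssrnat seq.
From Stdlib Require Import Classical.
Set Implicit Arguments. Unset Strict Implicit.

Lemma tgt_from_cat (Lam A : Type) (tgt : A -> Lam) l u v :
  tgt_from tgt l (u ++ v) = tgt_from tgt (tgt_from tgt l u) v.
Proof. by elim: u l => //= x u IH l. Qed.

Lemma valid_from_cat (Lam A : Type) (src tgt : A -> Lam) l u v :
  valid_from src tgt l (u ++ v) <->
  valid_from src tgt l u /\ valid_from src tgt (tgt_from tgt l u) v.
Proof.
elim: u l => [|x u IH] l /=; first by tauto.
rewrite IH; tauto.
Qed.

Lemma pequiv_inv (Lam A : Type) (src tgt : A -> Lam) lact ract f g :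
  qYB_preserving src tgt lact ract ->
  pequiv src tgt lact ract f g ->
  [/\ f.1 = g.1, size f.2 = size g.2 & tgt_from tgt f.1 f.2 = tgt_from tgt g.1 g.2].
Proof.
move=> Hp; elim => [f0|f0 g0 st|f0 g0 _ [? ? ?]|f0 g0 h0 _ [? ? ?] _ [? ? ?]].
- by [].
- case: st => l u x y v Hc /=.
  split => //; first by rewrite !size_cat.
  rewrite !tgt_from_cat /=. by case: (Hp x y Hc) => _ _ ->.
- by split.
- split; congruence.
Qed.

Lemma pequiv_app (Lam A : Type) (src tgt : A -> Lam) lact ract f g r :
  pequiv src tgt lact ract f g ->
  pequiv src tgt lact ract (f.1, f.2 ++ r) (g.1, g.2 ++ r).
Proof.
elim => [f0|f0 g0 st|f0 g0 _ IH|f0 g0 h0 _ IH1 _ IH2].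
- exact: pequiv_refl.
- case: st => l u x y v Hc /=. apply: pequiv_step.
  rewrite -!catA /=. exact: step_intro.
- exact: pequiv_sym.
- exact: pequiv_trans IH1 IH2.
Qed.

Lemma pequiv_cons (Lam A : Type) (src tgt : A -> Lam) lact ract f g l0 x0 :
  pequiv src tgt lact ract f g ->
  pequiv src tgt lact ract (l0, x0 :: f.2) (l0, x0 :: g.2).
Proof.
elim => [f0|f0 g0 st|f0 g0 _ IH|f0 g0 h0 _ IH1 _ IH2].
- exact: pequiv_refl.
- case: st => l u x y v Hc /=. apply: pequiv_step.
  exact: (@step_intro _ _ _ _ lact ract l0 (x0 :: u) x y v Hc).
- exact: pequiv_sym.
- exact: pequiv_trans IH1 IH2.
Qed.

Lemma move_lemma (Lam A : Type) (src tgt : A -> Lam) lact ract :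
  qYB_preserving src tgt lact ract ->
  nondegenerate src tgt lact ract ->
  forall w l z, valid_from src tgt l w -> src z = l ->
  exists c, src c = tgt_from tgt l w /\
  exists2 w', valid_from src tgt (tgt z) w' &
     pequiv src tgt lact ract (l, w ++ [:: c]) (l, z :: w').
Proof.
move=> Hp [Hnl _]; elim => [|x w IH] l z /=.
- move=> _ Hz; exists z; split => //; exists [::] => //. exact: pequiv_refl.
- move=> [Hx Hw] Hz.
  have [_ Hs] := Hnl x.
  have [y Hy Hxy] := Hs z (etrans Hz (esym Hx)).
  have [c [Hc [w1 Hw1 Heq]]] := IH (tgt x) y Hw Hy.
  exists c; split => //.
  have Hcomp : composable src tgt x y by rewrite /composable Hy.
  have [H1 H2 H3] := Hp x y Hcomp.
  exists (ract x y :: w1).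
  + rewrite /= -Hxy H2 H3; split => //.
  + apply: pequiv_trans (pequiv_cons l x Heq) _ => /=.
    rewrite -Hxy. apply: pequiv_step.
    exact: (@step_intro _ _ _ _ lact ract l [::] x y w1 Hcomp).
Qed.

Definition divides_arrow (Lam A : Type) (src tgt : A -> Lam) lact ract
   (l : Lam) (x : A) (w : seq A) :=
  exists2 r, valid_from src tgt (tgt x) r &
     pequiv src tgt lact ract (l, x :: r) (l, w).

Lemma delta_exists (Lam A : Type) (src tgt : A -> Lam) lact ract
  (enc : A -> nat) (l : Lam) :
  qYB_preserving src tgt lact ract ->
  nondegenerate src tgt lact ract ->
  (forall x y, src x = l -> src y = l -> enc x = enc y -> x = y) ->
  forall m, exists w, [/\ valid_from src tgt l w, size w <= m &
     forall x, src x = l -> enc x < m -> divides_arrow src tgt lact ract l x w].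
Proof.
move=> Hp Hnd Hinj; elim => [|m [w [Hw Hs Hd]]].
- exists [::]; split => //.
- case: (classic (exists x0, src x0 = l /\ enc x0 = m)).
  + move=> [x0 [Hx0 He0]].
    have [c [Hc [w' Hw' Heq]]] := move_lemma Hp Hnd Hw Hx0.
    exists (w ++ [:: c]); split.
    * apply/valid_from_cat; split => //=.
    * by rewrite size_cat addn1.
    * move=> x Hx Hlt. rewrite ltnS leq_eqVlt in Hlt.
      case/orP: Hlt => [/eqP Hm|Hlt].
      -- have -> : x = x0 by apply: Hinj => //; rewrite Hm He0.
         by exists w'; [|apply: pequiv_sym].
      -- have [r Hr Hrw] := Hd x Hx Hlt.
         exists (r ++ [:: c]).
         ++ apply/valid_from_cat; split => //=; split => //.
            have [_ _ Ht] := pequiv_inv Hp Hrw. by rewrite Hc -Ht.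
         ++ exact: (pequiv_app [:: c] Hrw).
  + move=> Hn; exists w; split => //; first by apply: leqW.
    move=> x Hx Hlt. rewrite ltnS leq_eqVlt in Hlt.
    case/orP: Hlt => [/eqP Hm|Hlt]; last exact: Hd.
    by exfalso; apply: Hn; exists x.
Qed.

Lemma closure_divides (Lam A : Type) (src tgt : A -> Lam) lact ract :
  qYB_preserving src tgt lact ract ->
  forall f, lcm_closure src tgt lact ract f ->
  forall w, valid_from src tgt f.1 w ->
  (forall x, src x = f.1 -> divides_arrow src tgt lact ract f.1 x w) ->
  rmult src tgt lact ract f (f.1, w).
Proof.
move=> Hp f; elim: f / => [x f Hf|f g h _ IHf _ IHg Hl] w Hw Hd.
- have [H1 H2 H3] := pequiv_inv Hp Hf.
  have [r Hr Hrw] := Hd x (esym H1).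
  exists r; first by rewrite /ptgt H3.
  apply: pequiv_trans (pequiv_app r Hf) _ => /=. rewrite H1 /=. by rewrite H1 in Hrw.
- case: Hl => Hh Hfh Hgh Hmin.
  have Hfh1 : f.1 = h.1 by case: Hfh => r _ /(pequiv_inv Hp) [].
  have Hgh1 : g.1 = h.1 by case: Hgh => r _ /(pequiv_inv Hp) [].
  apply: Hmin => //.
  + rewrite -Hfh1 in Hw Hd *. exact: IHf.
  + rewrite -Hgh1 in Hw Hd *. exact: IHg.
Qed.

Lemma long_path (Lam A : Type) (src tgt : A -> Lam) lact ract :
  nondegenerate src tgt lact ract ->
  forall k x, exists p, valid_from src tgt (tgt x) p /\ size p = k.
Proof.
move=> [Hnl _]; elim => [|k IH] x; first by exists [::].
have [_ Hs] := Hnl x.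
have [y Hy _] := Hs x erefl.
have [p [Hp Hs']] := IH y.
by exists (y :: p); split => //=; rewrite Hs'.
Qed.

Theorem corollary5p13 (Lam A : Type) (src tgt : A -> Lam) (lact ract : A -> A -> A)
  (n : nat) :
  qYB_map src tgt lact ract ->
  involutive_qYB src tgt lact ract ->
  nondegenerate src tgt lact ract ->
  (exists x : A, True) ->
  (forall l : Lam, exists enc : A -> nat,
     (forall x, src x = l -> enc x < n) /\
     (forall x y, src x = l -> src y = l -> enc x = enc y -> x = y)) ->
  (forall f : path Lam A, lcm_closure src tgt lact ract f -> plength f <= n) /\
  (exists f : path Lam A, valid src tgt f /\ ~ lcm_closure src tgt lact ract f).
Proof.
move=> [Hp _] _ Hnd [x0 _] Henc.
have P1 : forall f : path Lam A, lcm_closure src tgt lact ract f -> plength f <= n.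
  move=> f Hf.
  have [enc [Hlt Hinj]] := Henc f.1.
  have [w [Hw Hs Hd]] := delta_exists Hp Hnd Hinj n.
  have [r _ Hr] := closure_divides Hp Hf Hw (fun x Hx => Hd x Hx (Hlt x Hx)).
  have [_ Hsz _] := pequiv_inv Hp Hr.
  rewrite /plength. apply: leq_trans Hs.
  by rewrite -Hsz /= size_cat leq_addr.
split => //.
have [p [Hpv Hps]] := long_path Hnd n x0.
exists (src x0, x0 :: p); split; first by split.
move=> /P1. by rewrite /plength /= Hps ltnn.
Qed.
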